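(* For all $n\ge1$, $|\mathcal S_n[3]|=|\mathcal S'_n[3]|=3\cdot2^{2n+1}$.
   Context: Let $\tau=(1+\sqrt5)/2$, $\tau'=(1-\sqrt5)/2$. Let $\mathbb F_4=\mathbb{Z}[\tau]/2\mathbb{Z}[\tau]$ and for $y\in\mathbb{Z}[\tau]^3$ let $\bar y\in\mathbb F_4^3$ be the coordinatewise reduction. For $n\ge1$, $\mathcal S_n[3]=\{x\in2^{-n}\mathbb{Z}[\tau]^3: x\cdot x=1,\ \overline{2^nx}\in\{(\bar1,\bar{\tau'},\bar\tau),(\bar{\tau'},\bar\tau,\bar1),(\bar\tau,\bar1,\bar{\tau'})\}\}$ and $\mathcal S'_n[3]$ is defined in the same way with $\bar\tau$ and $\bar{\tau'}$ interchanged. *)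

(* Defs.v *)
From HB Require Import structures.
From mathcomp Require Import all_boot all_order all_algebra.
Set Implicit Arguments. Unset Strict Implicit. Unset Printing Implicit Defensive.
Import Order.TTheory GRing.Theory Num.Theory.
Local Open Scope ring_scope.

(* Q(tau) = Q(sqrt 5), an element (a, b) represents a + b*tau, tau^2 = tau + 1. *)
Definition Qtau := (rat * rat)%type.

Definition qt_add (x y : Qtau) : Qtau := (x.1 + y.1, x.2 + y.2).
(* (a + b tau)(c + d tau) = (ac + bd) + (ad + bc + bd) tau *)
Definition qt_mul (x y : Qtau) : Qtau :=
  (x.1 * y.1 + x.2 * y.2, x.1 * y.2 + x.2 * y.1 + x.2 * y.2).
Definition qt_scale (q : rat) (x : Qtau) : Qtau := (q * x.1, q * x.2).
Definition qt_one : Qtau := (1, 0).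

Definition in_Ztau (x : Qtau) : bool := (x.1 \is a Num.int) && (x.2 \is a Num.int).

(* F_4 = Z[tau]/2Z[tau]; an element (b0, b1) represents b0 + b1*tau mod 2. *)
Definition F4 := (bool * bool)%type.
Definition f4_one : F4 := (true, false).
Definition f4_tau : F4 := (false, true).
Definition f4_tau' : F4 := (true, true).   (* tau' = 1 - tau = 1 + tau mod 2 *)

(* reduction mod 2 of an element of Z[tau] (meaningful when in_Ztau x) *)
Definition red (x : Qtau) : F4 := (odd `|numq x.1|%N, odd `|numq x.2|%N).

Definition vec3 := (Qtau * Qtau * Qtau)%type.
Definition v_scale (q : rat) (x : vec3) : vec3 :=
  (qt_scale q x.1.1, qt_scale q x.1.2, qt_scale q x.2).
Definition v_dot (x y : vec3) : Qtau :=
  qt_add (qt_add (qt_mul x.1.1 y.1.1) (qt_mul x.1.2 y.1.2)) (qt_mul x.2 y.2).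
Definition v_inZ (x : vec3) : bool :=
  [&& in_Ztau x.1.1, in_Ztau x.1.2 & in_Ztau x.2].
Definition v_red (x : vec3) : F4 * F4 * F4 := (red x.1.1, red x.1.2, red x.2).

(* x in 2^{-n} Z[tau]^3 <-> 2^n x in Z[tau]^3 *)
Definition S3 (n : nat) (x : vec3) : Prop :=
  v_inZ (v_scale (2 ^+ n) x) /\ v_dot x x = qt_one /\
  v_red (v_scale (2 ^+ n) x) \in
    [:: (f4_one, f4_tau', f4_tau); (f4_tau', f4_tau, f4_one); (f4_tau, f4_one, f4_tau')].

Definition S3' (n : nat) (x : vec3) : Prop :=
  v_inZ (v_scale (2 ^+ n) x) /\ v_dot x x = qt_one /\
  v_red (v_scale (2 ^+ n) x) \in
    [:: (f4_one, f4_tau, f4_tau'); (f4_tau, f4_tau', f4_one); (f4_tau', f4_one, f4_tau)].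

Definition has_card (T : eqType) (P : T -> Prop) (k : nat) : Prop :=
  exists s : seq T, [/\ uniq s, (forall x, x \in s <-> P x) & size s = k].

(* Main.v *)
Require Import Defs.
From mathcomp Require Import all_boot all_order all_algebra zify ring.
Set Implicit Arguments. Unset Strict Implicit. Unset Printing Implicit Defensive.
Import Order.TTheory GRing.Theory Num.Theory.
Local Open Scope ring_scope.

Definition Zt := (int * int)%type.
Definition za (x y : Zt) : Zt := (x.1 + y.1, x.2 + y.2).
Definition zn (x : Zt) : Zt := (- x.1, - x.2).
Definition zm (x y : Zt) : Zt :=
  (x.1 * y.1 + x.2 * y.2, x.1 * y.2 + x.2 * y.1 + x.2 * y.2).
Definition zd (x : Zt) : Zt := (2 * x.1, 2 * x.2).
Definition z4 : Zt := (4, 0).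
Definition V := (Zt * Zt * Zt)%type.
Definition vd (x y : V) : Zt := za (za (zm x.1.1 y.1.1) (zm x.1.2 y.1.2)) (zm x.2 y.2).
Definition vadd (x y : V) : V := (za x.1.1 y.1.1, za x.1.2 y.1.2, za x.2 y.2).
Definition vsc (c : Zt) (x : V) : V := (zm c x.1.1, zm c x.1.2, zm c x.2).
Definition vdbl (x : V) : V := (zd x.1.1, zd x.1.2, zd x.2).
Definition vneg (x : V) : V := (zn x.1.1, zn x.1.2, zn x.2).
Definition fmap (w z : V) : V := vadd (vdbl z) (vneg (vsc (vd z w) w)).

Ltac zt := cbv beta iota delta [fmap vd vadd vsc vdbl vneg za zn zm zd z4 fst snd];
  repeat match goal with |- (_, _) = (_, _) => congr (_, _) end; ring.
Ltac dz := repeat match goal with x : V |- _ => destruct x as [[[? ?] [? ?]] [? ?]]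
  | x : Zt |- _ => destruct x end.

Lemma K1 w z : vd (fmap w z) w = za (zd (vd z w)) (zn (zm (vd z w) (vd w w))).
Proof. dz; zt. Qed.
Lemma K2 w z : vd (fmap w z) (fmap w z) =
  za (zm z4 (vd z z)) (za (zm (vd z w) (zm (vd z w) (vd w w))) (zn (zm z4 (zm (vd z w) (vd z w))))).
Proof. dz; zt. Qed.

Definition f0 : F4 := (false, false).
Definition fadd (x y : F4) : F4 := (x.1 (+) y.1, x.2 (+) y.2).
Definition fmul (x y : F4) : F4 :=
  ((x.1 && y.1) (+) (x.2 && y.2), (x.1 && y.2) (+) (x.2 && y.1) (+) (x.2 && y.2)).
Definition F43 := (F4 * F4 * F4)%type.
Definition fv0 : F43 := (f0, f0, f0).
Definition fvadd (x y : F43) : F43 := (fadd x.1.1 y.1.1, fadd x.1.2 y.1.2, fadd x.2 y.2).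
Definition fsc (l : F4) (x : F43) : F43 := (fmul l x.1.1, fmul l x.1.2, fmul l x.2).
Definition fdot (x y : F43) : F4 := fadd (fadd (fmul x.1.1 y.1.1) (fmul x.1.2 y.1.2)) (fmul x.2 y.2).

Definition r (x : Zt) : F4 := (odd (absz x.1), odd (absz x.2)).
Definition rv (x : V) : F43 := (r x.1.1, r x.1.2, r x.2).

Lemma oddDz (a b : int) : odd (absz (a + b)) = odd (absz a) (+) odd (absz b).
Proof. lia. Qed.
Lemma oddMz (a b : int) : odd (absz (a * b)) = odd (absz a) && odd (absz b).
Proof. by rewrite abszM oddM. Qed.
Lemma oddNz (a : int) : odd (absz (- a)) = odd (absz a).
Proof. by rewrite abszN. Qed.

Lemma r_add x y : r (za x y) = fadd (r x) (r y).
Proof. by case: x y => [a b] [c d]; rewrite /r /za /fadd /= !oddDz. Qed.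
Lemma r_mul x y : r (zm x y) = fmul (r x) (r y).
Proof. by case: x y => [a b] [c d]; rewrite /r /zm /fmul /= !oddDz !oddMz. Qed.
Lemma r_opp x : r (zn x) = r x.
Proof. by case: x => [a b]; rewrite /r /zn /= !oddNz. Qed.
Lemma r_dbl x : r (zd x) = f0.
Proof. by case: x => [a b]; rewrite /r /zd /= !oddMz. Qed.
Lemma odd_even (a : int) : odd (absz a) = false -> exists k, a = 2 * k.
Proof. move=> h; exists (a %/ 2)%Z; lia. Qed.
Lemma r_even x : r x = f0 -> exists k, x = zd k.
Proof.
case: x => [a b] [/odd_even [k ->] /odd_even [l ->]]; by exists (k, l).
Qed.

Lemma r_vd x y : r (vd x y) = fdot (rv x) (rv y).
Proof. by rewrite /vd /fdot !r_add !r_mul. Qed.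
Lemma rv_vadd x y : rv (vadd x y) = fvadd (rv x) (rv y).
Proof. by rewrite /rv /vadd /fvadd /= !r_add. Qed.
Lemma rv_vsc c x : rv (vsc c x) = fsc (r c) (rv x).
Proof. by rewrite /rv /vsc /fsc /= !r_mul. Qed.
Lemma rv_vdbl x : rv (vdbl x) = fv0.
Proof. by rewrite /rv /vdbl /= !r_dbl. Qed.
Lemma rv_vneg x : rv (vneg x) = rv x.
Proof. by rewrite /rv /vneg /= !r_opp. Qed.
Lemma rv_even x : rv x = fv0 -> exists k, x = vdbl k.
Proof.
case: x => [[x1 x2] x3] h.
have h1 : r x1 = f0 := f_equal (fun p : F43 => p.1.1) h.
have h2 : r x2 = f0 := f_equal (fun p : F43 => p.1.2) h.
have h3 : r x3 = f0 := f_equal (fun p : F43 => p.2) h.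
case: (r_even h1) => k1 e1; case: (r_even h2) => k2 e2; case: (r_even h3) => k3 e3.
by exists (k1, k2, k3); rewrite e1 e2 e3.
Qed.

Ltac fc := repeat match goal with x : F4 |- _ => destruct x as [[] []] end; reflexivity.
Lemma fmulA x y z : fmul x (fmul y z) = fmul (fmul x y) z. Proof. fc. Qed.
Lemma fmulC x y : fmul x y = fmul y x. Proof. fc. Qed.
Lemma fmul_addr x y z : fmul x (fadd y z) = fadd (fmul x y) (fmul x z). Proof. fc. Qed.
Lemma faddA x y z : fadd x (fadd y z) = fadd (fadd x y) z. Proof. fc. Qed.
Lemma faddC x y : fadd x y = fadd y x. Proof. fc. Qed.
Lemma fadd0 x : fadd x f0 = x. Proof. fc. Qed.
Lemma faddxx x : fadd x x = f0. Proof. fc. Qed.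
Lemma fmul0 x : fmul x f0 = f0. Proof. fc. Qed.
Lemma fmul1 x : fmul x (true, false) = x. Proof. fc. Qed.

Lemma fdot_sc l u v : fdot (fsc l u) v = fmul l (fdot u v).
Proof. by rewrite /fdot /fsc /= !fmul_addr !fmulA. Qed.
Lemma fdotC u v : fdot u v = fdot v u.
Proof. by rewrite /fdot (fmulC u.1.1) (fmulC u.1.2) (fmulC u.2). Qed.
Lemma fdot_scr l u v : fdot u (fsc l v) = fmul l (fdot u v).
Proof. by rewrite fdotC fdot_sc fdotC. Qed.

Lemma I_w z w1 d : vd z (vadd w1 (vdbl d)) = za (vd z w1) (zd (vd z d)).
Proof. dz; zt. Qed.
Lemma I_zdadd a c : za (zd a) (zd c) = zd (za a c).
Proof. dz; zt. Qed.
Lemma I_dbl z w : vd (vdbl z) w = zd (vd z w).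
Proof. dz; zt. Qed.
Lemma I_u y c w : vd (vadd y (vneg (vsc c w))) w = za (vd y w) (zn (zm c (vd w w))).
Proof. dz; zt. Qed.
Lemma I_uu y c w : vd (vadd y (vneg (vsc c w))) (vadd y (vneg (vsc c w))) =
  za (vd y y) (za (zn (zd (zm c (vd y w)))) (zm c (zm c (vd w w)))).
Proof. dz; zt. Qed.
Lemma I_back y c w : vadd (vadd y (vneg (vsc c w))) (vneg (vsc (zn c) w)) = y.
Proof. dz; zt. Qed.
Lemma I_dd z : vd (vdbl z) (vdbl z) = zm z4 (vd z z).
Proof. dz; zt. Qed.
Lemma I_canc x t : vadd (vadd x t) (vneg t) = x.
Proof. dz; zt. Qed.
Lemma T1 c : za (zd c) (zn (zm c z4)) = zd (zn c).
Proof. dz; zt. Qed.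
Lemma T2 m c : za (zm z4 m) (za (zm c (zm c z4)) (zn (zm z4 (zm c c)))) = zm z4 m.
Proof. dz; zt. Qed.
Lemma T4 m c : za (zm z4 m) (za (zn (zd (zm c (zd c)))) (zm c (zm c z4))) = zm z4 m.
Proof. dz; zt. Qed.
Lemma zd_inj : injective zd.
Proof. move=> [a b] [c d]; rewrite /zd => -[h1 h2]; congr (_, _); lia. Qed.
Lemma zn_inj : injective zn.
Proof. move=> [a b] [c d]; rewrite /zn => -[h1 h2]; congr (_, _); lia. Qed.
Lemma z4_inj : injective (zm z4).
Proof. move=> [a b] [c d]; rewrite /zm /z4 /= => -[h1 h2]; congr (_, _); lia. Qed.
Lemma vdbl_inj : injective vdbl.
Proof.
move=> [[x1 x2] x3] [[y1 y2] y3] h.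
have h1 := zd_inj (f_equal (fun p : V => p.1.1) h).
have h2 := zd_inj (f_equal (fun p : V => p.1.2) h).
have h3 := zd_inj (f_equal (fun p : V => p.2) h).
by rewrite /= in h1 h2 h3; rewrite h1 h2 h3.
Qed.
Lemma fvadd0 x : fvadd fv0 x = x.
Proof. by case: x => [[a b] c]; rewrite /fvadd /= !(faddC f0) !fadd0. Qed.
Lemma fvaddxx x : fvadd x x = fv0.
Proof. by case: x => [[a b] c]; rewrite /fvadd /= !faddxx. Qed.

Definition Wof (w1 : V) (Ds : seq V) := [seq vadd w1 (vdbl d) | d <- Ds].

Section Core.
Variables (w1 : V) (Ds : seq V) (C : seq F43).
Let b := rv w1.
Let W := Wof w1 Ds.
Hypothesis hWW : forall w, w \in W -> vd w w = z4.
Hypothesis hb1 : b.1.1 = (true, false).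
Hypothesis hbb : fdot b b = f0.
Hypothesis hC : forall c, c \in C <-> exists2 l, l != f0 & c = fsc l b.
Hypothesis hD : forall rh l, l != f0 ->
  exists2 d, d \in Ds & fadd rh (fmul l (fdot b (rv d))) = l.
Hypothesis hDu : forall rh l d d', l != f0 -> d \in Ds -> d' \in Ds ->
  fadd rh (fmul l (fdot b (rv d))) = l -> fadd rh (fmul l (fdot b (rv d'))) = l -> d = d'.

Lemma rvW d : rv (vadd w1 (vdbl d)) = b.
Proof. by rewrite rv_vadd rv_vdbl /fvadd /= !fadd0; case: (rv w1) => [[]]. Qed.

Lemma sc_inj l l' : fsc l b = fsc l' b -> l = l'.
Proof.
move=> h; have e : fmul l b.1.1 = fmul l' b.1.1 := f_equal (fun p : F43 => p.1.1) h.
by rewrite hb1 !fmul1 in e.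
Qed.

Lemma rfmap w z : w \in W -> rv (fmap w z) = fsc (r (vd z w1)) b.
Proof.
case/mapP=> d _ ->; rewrite /fmap rv_vadd rv_vdbl fvadd0 rv_vneg rv_vsc rvW.
by rewrite I_w r_add r_dbl fadd0.
Qed.

Lemma Lfwd z w m : vd z z = m -> r (vd z w1) != f0 -> w \in W ->
  vd (fmap w z) (fmap w z) = zm z4 m /\ rv (fmap w z) \in C.
Proof.
move=> hz hl hw; split.
  by rewrite K2 (hWW hw) hz T2.
by apply/hC; exists (r (vd z w1)) => //; rewrite rfmap.
Qed.

Lemma Lbwd y m : vd y y = zm z4 m -> rv y \in C ->
  exists z, exists2 w, w \in W & [/\ y = fmap w z, vd z z = m & r (vd z w1) != f0].
Proof.
move=> hy /hC [l hl hly].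
have ryw1 : r (vd y w1) = f0.
  by rewrite r_vd hly fdot_sc; change (fmul l (fdot b b) = f0); rewrite hbb fmul0.
case: (r_even ryw1) => h hh.
case: (hD (r h) hl) => d hd hP.
have hw : vadd w1 (vdbl d) \in W by apply: map_f.
have hyw : vd y (vadd w1 (vdbl d)) = zd (za h (vd y d)) by rewrite I_w hh I_zdadd.
have rh' : r (za h (vd y d)) = l by rewrite r_add r_vd hly fdot_sc hP.
have ru : rv (vadd y (vneg (vsc (za h (vd y d)) (vadd w1 (vdbl d))))) = fv0.
  by rewrite rv_vadd rv_vneg rv_vsc rh' rvW hly fvaddxx.
case: (rv_even ru) => z hz.
have hzw : vd z (vadd w1 (vdbl d)) = zn (za h (vd y d)).
  by apply: zd_inj; rewrite -I_dbl -hz I_u hyw (hWW hw) T1.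
exists z, (vadd w1 (vdbl d)) => //; split.
- by rewrite /fmap hzw -hz I_back.
- by apply: z4_inj; rewrite -I_dd -hz I_uu hy hyw (hWW hw) T4.
- have : r (vd z (vadd w1 (vdbl d))) = r (vd z w1) by rewrite I_w r_add r_dbl fadd0.
  by rewrite hzw r_opp rh' => <-.
Qed.

Lemma Linj z z' w w' : r (vd z w1) != f0 -> w \in W -> w' \in W ->
  fmap w z = fmap w' z' -> z = z' /\ w = w'.
Proof.
move=> hl hw hw' e.
have e1 := rfmap z hw.
have e2 := rfmap z' hw'.
have ll : r (vd z' w1) = r (vd z w1) by apply: sc_inj; rewrite -e1 -e2 e.
have ryw1 : r (vd (fmap w z) w1) = f0.
  by rewrite r_vd e1 fdot_sc; change (fmul (r (vd z w1)) (fdot b b) = f0); rewrite hbb fmul0.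
case: (r_even ryw1) => h hh.
have key : forall zz dd, dd \in Ds -> fmap (vadd w1 (vdbl dd)) zz = fmap w z ->
    r (vd zz w1) = r (vd z w1) ->
    fadd (r h) (fmul (r (vd z w1)) (fdot b (rv dd))) = r (vd z w1).
  move=> zz dd hdd ey hl'.
  have hwd : vadd w1 (vdbl dd) \in W by apply: map_f.
  have e3 : vd (fmap w z) (vadd w1 (vdbl dd)) = zd (zn (vd zz (vadd w1 (vdbl dd)))).
    by rewrite -ey K1 (hWW hwd) T1.
  rewrite I_w hh I_zdadd in e3.
  have e4 := f_equal r (zd_inj e3).
  by rewrite r_add r_vd e1 fdot_sc r_opp I_w r_add r_dbl fadd0 hl' in e4.
case/mapP: (hw) => d hd ew; case/mapP: (hw') => d' hd' ew'.
have P1 := key z d hd ltac:(by rewrite -ew) erefl.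
have P2 := key z' d' hd' ltac:(by rewrite -ew' -e) ll.
have edd := hDu hl hd hd' P1 P2.
have eww : w = w' by rewrite ew ew' edd.
split=> //.
rewrite -eww in e.
have hww := hWW hw.
have ec : vd z w = vd z' w.
  have k1 := K1 w z; have k2 := K1 w z'.
  rewrite e hww T1 in k1; rewrite hww T1 in k2.
  by apply: zn_inj; apply: zd_inj; rewrite -k1 -k2.
apply: vdbl_inj.
by rewrite -(I_back (vdbl z) (vd z w) w) -(I_back (vdbl z') (vd z' w) w) -ec -/(fmap w z) e ec.
Qed.

End Core.

Definition tau' : Zt := (1, -1).
Definition tau : Zt := (0, 1).
Definition Z0 : Zt := (0, 0).
Definition Z1 : Zt := (1, 0).
Definition wA : V := (Z1, tau', tau).
Definition DsA : seq V := [:: (Z0, Z0, Z0); (Z0, zn tau', Z0); (Z0, Z0, zn tau); (Z0, zn tau', zn tau)].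
Definition wB : V := (Z1, tau, tau').
Definition DsB : seq V := [:: (Z0, Z0, Z0); (Z0, zn tau, Z0); (Z0, Z0, zn tau'); (Z0, zn tau, zn tau')].
Definition CA : seq F43 :=
  [:: (f4_one, f4_tau', f4_tau); (f4_tau', f4_tau, f4_one); (f4_tau, f4_one, f4_tau')].
Definition CB : seq F43 :=
  [:: (f4_one, f4_tau, f4_tau'); (f4_tau, f4_tau', f4_one); (f4_tau', f4_one, f4_tau)].

Lemma hWW_of w1 Ds : all (fun w => vd w w == z4) (Wof w1 Ds) ->
  forall w, w \in Wof w1 Ds -> vd w w = z4.
Proof. by move=> /allP h w /h /eqP. Qed.

Lemma hD_of w1 Ds :
  (forall rh l, (l != f0) ==> has (fun d => fadd rh (fmul l (fdot (rv w1) (rv d))) == l) Ds) ->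
  forall rh l, l != f0 -> exists2 d, d \in Ds & fadd rh (fmul l (fdot (rv w1) (rv d))) = l.
Proof.
move=> h rh l hl; have := h rh l; rewrite hl /= => /hasP [d hd /eqP e]; by exists d.
Qed.

Lemma hDu_of w1 Ds :
  (forall rh l, (l != f0) ==> all (fun d => all (fun d' =>
     (fadd rh (fmul l (fdot (rv w1) (rv d))) == l) ==>
     (fadd rh (fmul l (fdot (rv w1) (rv d'))) == l) ==> (d == d')) Ds) Ds) ->
  forall rh l d d', l != f0 -> d \in Ds -> d' \in Ds ->
  fadd rh (fmul l (fdot (rv w1) (rv d))) = l -> fadd rh (fmul l (fdot (rv w1) (rv d'))) = l -> d = d'.
Proof.
move=> h rh l d d' hl hd hd' e e'; have := h rh l; rewrite hl /= => /allP /(_ d hd) /allP /(_ d' hd').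
by rewrite e e' !eqxx /= => /eqP.
Qed.

Lemma WWA : forall w, w \in Wof wA DsA -> vd w w = z4.
Proof. by apply: hWW_of. Qed.
Lemma WWB : forall w, w \in Wof wB DsB -> vd w w = z4.
Proof. by apply: hWW_of. Qed.
Lemma b1A : (rv wA).1.1 = (true, false). Proof. by []. Qed.
Lemma b1B : (rv wB).1.1 = (true, false). Proof. by []. Qed.
Lemma bbA : fdot (rv wA) (rv wA) = f0. Proof. by []. Qed.
Lemma bbB : fdot (rv wB) (rv wB) = f0. Proof. by []. Qed.
Lemma hCA c : c \in CA <-> exists2 l, l != f0 & c = fsc l (rv wA).
Proof.
split.
  rewrite !inE => /or3P [] /eqP ->.
  - by exists (true, false).
  - by exists (true, true).
  - by exists (false, true).
by case=> -[[] []] // _ ->.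
Qed.
Lemma hCB c : c \in CB <-> exists2 l, l != f0 & c = fsc l (rv wB).
Proof.
split.
  rewrite !inE => /or3P [] /eqP ->.
  - by exists (true, false).
  - by exists (false, true).
  - by exists (true, true).
by case=> -[[] []] // _ ->.
Qed.
Lemma hDA : forall rh l, l != f0 ->
  exists2 d, d \in DsA & fadd rh (fmul l (fdot (rv wA) (rv d))) = l.
Proof. apply: hD_of; by move=> [[] []] [[] []]. Qed.
Lemma hDB : forall rh l, l != f0 ->
  exists2 d, d \in DsB & fadd rh (fmul l (fdot (rv wB) (rv d))) = l.
Proof. apply: hD_of; by move=> [[] []] [[] []]. Qed.
Lemma hDuA : forall rh l d d', l != f0 -> d \in DsA -> d' \in DsA ->
  fadd rh (fmul l (fdot (rv wA) (rv d))) = l -> fadd rh (fmul l (fdot (rv wA) (rv d'))) = l -> d = d'.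
Proof. apply: hDu_of; by move=> [[] []] [[] []]. Qed.
Lemma hDuB : forall rh l d d', l != f0 -> d \in DsB -> d' \in DsB ->
  fadd rh (fmul l (fdot (rv wB) (rv d))) = l -> fadd rh (fmul l (fdot (rv wB) (rv d'))) = l -> d = d'.
Proof. apply: hDu_of; by move=> [[] []] [[] []]. Qed.
Lemma uniqWA : uniq (Wof wA DsA). Proof. by []. Qed.
Lemma uniqWB : uniq (Wof wB DsB). Proof. by []. Qed.

Lemma Ia a bb : a = za (za a (zn bb)) bb.
Proof. dz; zt. Qed.
Lemma IJ bb e c' : za (za (zm (za (zd e) bb) (za (zd e) bb)) (zm bb bb)) (zm (zd c') (zd c')) =
  zd (za (zm bb bb) (zd (za (za (zm bb e) (zm e e)) (zm c' c')))).
Proof. dz; zt. Qed.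
Lemma Iz4 m : zm z4 m = zd (zd m).
Proof. dz; zt. Qed.
Lemma fsq0 x : fmul x x = f0 -> x = f0.
Proof. by case: x => [[] []]. Qed.
Lemma r_z4 m : r (zm z4 m) = f0.
Proof. by rewrite Iz4 r_dbl. Qed.

Lemma L4 a bb c m : za (za (zm a a) (zm bb bb)) (zm c c) = zm z4 m -> r c = f0 -> r a = r bb ->
  r a = f0.
Proof.
move=> hs hc hab.
case: (r_even hc) => c' ec.
have : r (za a (zn bb)) = f0 by rewrite r_add r_opp hab faddxx.
case/r_even => e he.
have ea : a = za (zd e) bb by rewrite -he -Ia.
rewrite ea ec IJ Iz4 in hs.
have h2 := f_equal r (zd_inj hs).
rewrite r_add !r_dbl fadd0 r_mul in h2.
by rewrite hab; apply: fsq0.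
Qed.

Lemma IP1 z1 z2 z3 : za (za (zm z2 z2) (zm z3 z3)) (zm z1 z1) = vd (z1, z2, z3) (z1, z2, z3).
Proof. dz; zt. Qed.
Lemma IP2 z1 z2 z3 : za (za (zm z1 z1) (zm z3 z3)) (zm z2 z2) = vd (z1, z2, z3) (z1, z2, z3).
Proof. dz; zt. Qed.
Lemma IP3 z1 z2 z3 : za (za (zm z1 z1) (zm z2 z2)) (zm z3 z3) = vd (z1, z2, z3) (z1, z2, z3).
Proof. by []. Qed.

Lemma M2gen (w : V) (C' : seq F43) :
  (forall v, (fdot v v == f0) ==> (fdot v (rv w) != f0) ==> [|| v \in C',
     (v.1.1 == f0) && (v.1.2 == v.2), (v.1.2 == f0) && (v.1.1 == v.2) |
     (v.2 == f0) && (v.1.1 == v.1.2)]) ->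
  (forall v, v \in C' -> fdot v (rv w) != f0) ->
  forall z m, vd z z = zm z4 m -> (r (vd z w) != f0 <-> rv z \in C').
Proof.
move=> fin fin2 [[z1 z2] z3] m hz; rewrite r_vd; split; last exact: fin2.
move=> hl.
have hv : fdot (rv (z1, z2, z3)) (rv (z1, z2, z3)) = f0 by rewrite -r_vd hz r_z4.
have := fin (rv (z1, z2, z3)); rewrite hv eqxx hl /=.
case/or4P => // /andP [/eqP h0 /eqP h1]; exfalso; move: hl.
- have h := L4 (etrans (IP1 z1 z2 z3) hz) h0 h1.
  by rewrite /rv /= h0 -h1 h.
- have h := L4 (etrans (IP2 z1 z2 z3) hz) h0 h1.
  by rewrite /rv /= h0 -h1 h.
- have h := L4 (etrans (IP3 z1 z2 z3) hz) h0 h1.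
  by rewrite /rv /= h0 -h1 h.
Qed.

Lemma finA v : (fdot v v == f0) ==> (fdot v (rv wA) != f0) ==> [|| v \in CB,
     (v.1.1 == f0) && (v.1.2 == v.2), (v.1.2 == f0) && (v.1.1 == v.2) |
     (v.2 == f0) && (v.1.1 == v.1.2)].
Proof. by case: v => [[[[] []] [[] []]] [[] []]]. Qed.
Lemma finB v : (fdot v v == f0) ==> (fdot v (rv wB) != f0) ==> [|| v \in CA,
     (v.1.1 == f0) && (v.1.2 == v.2), (v.1.2 == f0) && (v.1.1 == v.2) |
     (v.2 == f0) && (v.1.1 == v.1.2)].
Proof. by case: v => [[[[] []] [[] []]] [[] []]]. Qed.
Lemma finA2 v : v \in CB -> fdot v (rv wA) != f0.
Proof. by rewrite !inE => /or3P [] /eqP ->. Qed.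
Lemma finB2 v : v \in CA -> fdot v (rv wB) != f0.
Proof. by rewrite !inE => /or3P [] /eqP ->. Qed.

Definition pow4 (n : nat) : Zt := ((4 : int) ^+ n, 0).
Lemma pow4S n : zm z4 (pow4 n) = pow4 n.+1.
Proof. rewrite /zm /z4 /pow4 /= exprS; congr (_, _); ring. Qed.

Definition E : seq V := [:: (Z1, Z0, Z0); (zn Z1, Z0, Z0); (Z0, Z1, Z0); (Z0, zn Z1, Z0);
  (Z0, Z0, Z1); (Z0, Z0, zn Z1)].

Lemma A0 z : vd z z = pow4 0 -> z \in E.
Proof.
case: z => [[[a1 b1] [a2 b2]] [a3 b3]].
cbv beta iota delta [vd za zm pow4 fst snd] => -[h1 h2].
rewrite expr0 in h1.
have hb : b1 = 0 /\ b2 = 0 /\ b3 = 0 by nia.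
case: hb => e1 [e2 e3]; subst b1 b2 b3.
have : (a1 = 1 \/ a1 = -1) /\ a2 = 0 /\ a3 = 0 \/ (a2 = 1 \/ a2 = -1) /\ a1 = 0 /\ a3 = 0 \/
  (a3 = 1 \/ a3 = -1) /\ a1 = 0 /\ a2 = 0 by nia.
by case=> [[[]->[->->]]|[[[]->[->->]]|[[]->[->->]]]].
Qed.

Definition WA := Wof wA DsA.
Definition WB := Wof wB DsB.

Fixpoint LL (n : nat) : seq V * seq V :=
  if n is n'.+1 then
    ([seq fmap w z | z <- (LL n').2, w <- WB], [seq fmap w z | z <- (LL n').1, w <- WA])
  else (E, E).

Lemma LLS1 n : (LL n.+1).1 = [seq fmap w z | z <- (LL n).2, w <- WB]. Proof. by []. Qed.
Lemma LLS2 n : (LL n.+1).2 = [seq fmap w z | z <- (LL n).1, w <- WA]. Proof. by []. Qed.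

Definition Aset (w : V) (n : nat) (z : V) := vd z z = pow4 n /\ r (vd z w) != f0.

Lemma E_ok : all (fun z => (vd z z == pow4 0) && (r (vd z wA) != f0) && (r (vd z wB) != f0)) E.
Proof. by []. Qed.

Lemma LLmem n : (forall z, z \in (LL n).1 <-> Aset wA n z) /\
                (forall z, z \in (LL n).2 <-> Aset wB n z).
Proof.
elim: n => [|n [IH1 IH2]].
  split=> z; (split; [move=> hz; have := allP E_ok z hz; case/andP => /andP [/eqP h1 h2] h3 |
     move=> [h1 _]; exact: A0]); by split.
split=> z; rewrite ?LLS1 ?LLS2.
- split.
    case/allpairsP => -[z' w] /= [hz' hw ->].
    case: (IH2 z') => /(_ hz') [h1 h2] _.
    case: (Lfwd WWB hCB h1 h2 hw) => h3 h4.
    rewrite /Aset -pow4S h3; split=> //.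
    by apply/(M2gen finA finA2 h3).
  move=> [h1 h2].
  rewrite -pow4S in h1.
  have h3 := (M2gen finA finA2 h1).1 h2.
  case: (Lbwd WWB bbB hCB hDB h1 h3) => z' [w hw [-> h4 h5]].
  apply/allpairsP; exists (z', w); split=> //.
  by apply/IH2.
- split.
    case/allpairsP => -[z' w] /= [hz' hw ->].
    case: (IH1 z') => /(_ hz') [h1 h2] _.
    case: (Lfwd WWA hCA h1 h2 hw) => h3 h4.
    rewrite /Aset -pow4S h3; split=> //.
    by apply/(M2gen finB finB2 h3).
  move=> [h1 h2].
  rewrite -pow4S in h1.
  have h3 := (M2gen finB finB2 h1).1 h2.
  case: (Lbwd WWA bbA hCA hDA h1 h3) => z' [w hw [-> h4 h5]].
  apply/allpairsP; exists (z', w); split=> //.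
  by apply/IH1.
Qed.

Lemma LLuniq n : uniq (LL n).1 /\ uniq (LL n).2.
Proof.
elim: n => [|n [IH1 IH2]]; first by [].
have [M1 M2] := LLmem n.
rewrite LLS1 LLS2; split.
- apply: (allpairs_uniq IH2 uniqWB).
  move=> [z w] [z' w'] i1 i2 /= e.
  case/allpairsP: i1 => -[z1 w1'] /= [hz1 hw1 [ez ew]].
  case/allpairsP: i2 => -[z2 w2'] /= [hz2 hw2 [ez' ew']].
  subst; by case: (Linj WWB b1B bbB hDuB (proj2 ((M2 z1).1 hz1)) hw1 hw2 e) => -> ->.
- apply: (allpairs_uniq IH1 uniqWA).
  move=> [z w] [z' w'] i1 i2 /= e.
  case/allpairsP: i1 => -[z1 w1'] /= [hz1 hw1 [ez ew]].
  case/allpairsP: i2 => -[z2 w2'] /= [hz2 hw2 [ez' ew']].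
  subst; by case: (Linj WWA b1A bbA hDuA (proj2 ((M1 z1).1 hz1)) hw1 hw2 e) => -> ->.
Qed.

Lemma LLsize n : size (LL n).1 = (6 * 4 ^ n)%N /\ size (LL n).2 = (6 * 4 ^ n)%N.
Proof.
elim: n => [|n [IH1 IH2]]; first by [].
have sA : size WA = 4%N by [].
have sB : size WB = 4%N by [].
rewrite LLS1 LLS2 !size_allpairs IH1 IH2 sA sB expnS; split; lia.
Qed.

Definition emb (x : Zt) : Qtau := ((x.1)%:~R, (x.2)%:~R).
Definition vemb (y : V) : vec3 := (emb y.1.1, emb y.1.2, emb y.2).
Definition unemb (q : Qtau) : Zt := (numq q.1, numq q.2).
Lemma embK : cancel emb unemb.
Proof. by move=> [a b]; rewrite /emb /unemb /= !numq_int. Qed.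
Lemma vemb_inj : injective vemb.
Proof.
move=> [[x1 x2] x3] [[y1 y2] y3] h.
have h1 := can_inj embK (f_equal (fun p : vec3 => p.1.1) h).
have h2 := can_inj embK (f_equal (fun p : vec3 => p.1.2) h).
have h3 := can_inj embK (f_equal (fun p : vec3 => p.2) h).
by rewrite /= in h1 h2 h3; rewrite h1 h2 h3.
Qed.

Lemma emb_add x y : emb (za x y) = qt_add (emb x) (emb y).
Proof. by case: x y => [a b] [c d]; rewrite /emb /za /qt_add /= !rmorphD. Qed.
Lemma emb_mul x y : emb (zm x y) = qt_mul (emb x) (emb y).
Proof. by case: x y => [a b] [c d]; rewrite /emb /zm /qt_mul /= !rmorphD !rmorphM. Qed.
Lemma vdot_emb x y : v_dot (vemb x) (vemb y) = emb (vd x y).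
Proof. by rewrite /v_dot /vd !emb_add !emb_mul. Qed.
Lemma red_emb x : red (emb x) = r x.
Proof. by case: x => [a b]; rewrite /red /emb /r /= !numq_int. Qed.
Lemma vred_emb y : v_red (vemb y) = rv y.
Proof. by rewrite /v_red /rv /= !red_emb. Qed.
Lemma vinZ_emb y : v_inZ (vemb y).
Proof. by rewrite /v_inZ /in_Ztau /= !rpred_int. Qed.
Lemma vinZ_ex u : v_inZ u -> exists y, u = vemb y.
Proof.
case: u => [[[a1 b1] [a2 b2]] [a3 b3]].
rewrite /v_inZ /in_Ztau /= => /and3P [/andP [/intrP [k1 ->] /intrP [l1 ->]]
  /andP [/intrP [k2 ->] /intrP [l2 ->]] /andP [/intrP [k3 ->] /intrP [l3 ->]]].
by exists ((k1, l1), (k2, l2), (k3, l3)).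
Qed.

Lemma v_scaleM s t u : v_scale s (v_scale t u) = v_scale (s * t) u.
Proof. by rewrite /v_scale /qt_scale /= !mulrA. Qed.
Lemma v_scale1 u : v_scale 1 u = u.
Proof. by case: u => [[[? ?] [? ?]] [? ?]]; rewrite /v_scale /qt_scale /= !mul1r. Qed.
Lemma v_dot_scale s u : v_dot (v_scale s u) (v_scale s u) = qt_scale (s * s) (v_dot u u).
Proof.
case: u => [[[a1 b1] [a2 b2]] [a3 b3]].
rewrite /v_dot /v_scale /qt_scale /qt_add /qt_mul /=; congr (_, _); ring.
Qed.

Definition g (n : nat) (y : V) : vec3 := v_scale ((2 : rat) ^- n) (vemb y).

Lemma two_pow_neq0 n : (2 : rat) ^+ n != 0.
Proof. by rewrite expf_neq0. Qed.

Lemma g_inj n : injective (g n).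
Proof.
move=> y y' h; apply: vemb_inj.
have := f_equal (v_scale (2 ^+ n)) h.
by rewrite /g !v_scaleM mulfV ?two_pow_neq0 // !v_scale1.
Qed.

Lemma pow4_emb n : emb (pow4 n) = qt_scale ((2 : rat) ^+ n * 2 ^+ n) qt_one.
Proof.
rewrite /emb /pow4 /qt_scale /qt_one /= mulr1 mulr0 -exprMn rmorphXn /=.
by congr (_ ^+ _, _).
Qed.

Lemma S3gen n (Cl : seq F43) x :
  (v_inZ (v_scale (2 ^+ n) x) /\ v_dot x x = qt_one /\ v_red (v_scale (2 ^+ n) x) \in Cl) <->
  exists y, x = g n y /\ vd y y = pow4 n /\ rv y \in Cl.
Proof.
split.
  move=> [hZ [hd hr]].
  case: (vinZ_ex hZ) => y hy.
  exists y; split; [|split].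
  - by rewrite /g -hy v_scaleM mulVf ?two_pow_neq0 // v_scale1.
  - apply: (can_inj embK); rewrite -vdot_emb -hy v_dot_scale hd pow4_emb.
    by [].
  - by rewrite -vred_emb -hy.
move=> [y [-> [h1 h2]]].
have e : v_scale (2 ^+ n) (g n y) = vemb y.
  by rewrite /g v_scaleM mulfV ?two_pow_neq0 // v_scale1.
rewrite e vinZ_emb vred_emb; split=> //; split=> //.
have st : (2 : rat) ^- n * 2 ^+ n = 1 by rewrite mulVf ?two_pow_neq0.
rewrite /g v_dot_scale vdot_emb h1 pow4_emb /qt_scale /qt_one /= mulr1 !mulr0.
by rewrite mulrACA st mulr1.
Qed.

Local Close Scope ring_scope.

Theorem mainTheorem9 (n : nat) (hn : (1 <= n)%N) :
  has_card (S3 n) (3 * 2 ^ (2 * n + 1))%N /\ has_card (S3' n) (3 * 2 ^ (2 * n + 1))%N.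
Proof.
case: n hn => [//|n] _.
have [M1 M2] := LLmem n.+1.
have [U1 U2] := LLuniq n.+1.
have [Z1 Z2] := LLsize n.+1.
have ar : (6 * 4 ^ n.+1 = 3 * 2 ^ (2 * n.+1 + 1))%N.
  by rewrite expnD expnM (_ : (2 ^ 2 = 4)%N) // expn1; lia.
have hp : pow4 n.+1 = zm z4 (pow4 n) by rewrite pow4S.
split.
- exists [seq g n.+1 y | y <- (LL n.+1).2]; split.
  + by rewrite map_inj_uniq //; exact: g_inj.
  + move=> x; split.
      case/mapP => y hy ->.
      apply: ((S3gen _ CA _).2).
      have [h1 h2] := (M2 y).1 hy.
      exists y; split=> //; split=> //.
      by apply/(M2gen finB finB2 (etrans h1 hp)).
    move=> hx; have := (S3gen _ CA x).1 hx.
    move=> [y [-> [h1 h2]]].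
    apply: map_f; apply/M2; split=> //.
    by apply/(M2gen finB finB2 (etrans h1 hp)).
  + by rewrite size_map Z2.
- exists [seq g n.+1 y | y <- (LL n.+1).1]; split.
  + by rewrite map_inj_uniq //; exact: g_inj.
  + move=> x; split.
      case/mapP => y hy ->.
      apply: ((S3gen _ CB _).2).
      have [h1 h2] := (M1 y).1 hy.
      exists y; split=> //; split=> //.
      by apply/(M2gen finA finA2 (etrans h1 hp)).
    move=> hx; have := (S3gen _ CB x).1 hx.
    move=> [y [-> [h1 h2]]].
    apply: map_f; apply/M1; split=> //.
    by apply/(M2gen finA finA2 (etrans h1 hp)).
  + by rewrite size_map Z1.
Qed.
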